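(* For all integers $m,n\ge1$ and every $c>\frac{m!\,n!}{m^m n^n}$ one has $\operatorname{D}^\times_{m,n}(c\psi_1)=\mathbb R^{m\times n}$.
   Context: For $Y\in\mathbb R^{m\times n}$ let $Y_1,\dots,Y_m$ be its rows. For $\boldsymbol x\in\mathbb R^n$ put $\Pi_+(\boldsymbol x):=\prod_{i=1}^n\max\{1,|x_i|\}$. For $\psi:[1,\infty)\to(0,\infty)$ and $T>1$ let $\mathcal S^\times_{m,n}(\psi,T)$ be the set of $Y\in\mathbb R^{m\times n}$ for which there exist $\boldsymbol p\in\mathbb Z^m$, $\boldsymbol q\in\mathbb Z^n\setminus\{\boldsymbol 0\}$ with $\prod_{i=1}^m|Y_i\boldsymbol q-p_i|<\psi(T)$ and $\Pi_+(\boldsymbol q)<T$. Put $\operatorname{D}^\times_{m,n}(\psi):=\bigcup_{T_0>1}\bigcap_{T\ge T_0}\mathcal S^\times_{m,n}(\psi,T)$, and $\psi_1(x):=1/x$. *)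

(* Defs.v *)
From HB Require Import structures.
From mathcomp Require Import all_boot all_order all_algebra.
From mathcomp Require Import reals.
Set Implicit Arguments. Unset Strict Implicit. Unset Printing Implicit Defensive.
Import Order.TTheory GRing.Theory Num.Theory.
Local Open Scope ring_scope.

Definition Pi_plus (R : realType) (n : nat) (q : 'I_n -> int) : R :=
  \prod_(j < n) Num.max 1 (`|q j|%:~R : R).

Definition row_form (R : realType) (m n : nat) (Y : 'M[R]_(m, n))
    (q : 'I_n -> int) (p : 'I_m -> int) (i : 'I_m) : R :=
  \sum_(j < n) Y i j * (q j)%:~R - (p i)%:~R.

Definition S_times (R : realType) (m n : nat) (psi : R -> R) (T : R)
    (Y : 'M[R]_(m, n)) : Prop :=
  exists (p : 'I_m -> int) (q : 'I_n -> int),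
    (exists j, q j != 0) /\
    \prod_(i < m) `|@row_form R m n Y q p i| < psi T /\
    @Pi_plus R n q < T.

Definition D_times (R : realType) (m n : nat) (psi : R -> R)
    (Y : 'M[R]_(m, n)) : Prop :=
  exists T0 : R, 1 < T0 /\ forall T : R, T0 <= T -> @S_times R m n psi T Y.

Definition psi1 (R : realType) (x : R) : R := x^-1.

(* Main.v *)
Require Import Defs.
From HB Require Import structures.
From mathcomp Require Import all_boot all_order all_algebra.
From mathcomp Require Import reals.
From mathcomp Require Import zify ring lra.
From Stdlib Require Import Classical.
Import Order.TTheory GRing.Theory Num.Theory.
Local Open Scope int_scope.
Local Open Scope nat_scope.

Fixpoint sym (R : nat) : seq int :=
  if R is R'.+1 then Posz R'.+1 :: Negz R' :: sym R' else [:: Posz 0].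

Fixpoint cp (k R : nat) : seq (seq int) :=
  if k is k'.+1 then [seq a :: x | a <- sym R, x <- cp k' (R - absz a)]
  else [:: [::]].

Lemma sym_abs R a : a \in sym R -> (absz a <= R)%N.
Proof.
elim: R => [|R IH] /=; first by rewrite inE => /eqP->.
rewrite !inE => /orP[/eqP->//|/orP[/eqP->//|/IH]].
by move=> h; apply: leq_trans h _.
Qed.

Lemma sym_uniq R : uniq (sym R).
Proof.
elim: R => [|R IH] //=; rewrite IH andbT !inE negb_or.
apply/andP; split; [apply/andP; split|].
- by [].
- by apply/negP => /sym_abs; rewrite absz_nat ltnn.
- by apply/negP => /sym_abs /=; rewrite ltnn.
Qed.

Lemma sumn_sym (G : nat -> nat) R :
  sumn [seq G (absz a) | a <- sym R] = (G 0 + 2 * \sum_(j < R) G j.+1)%N.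
Proof.
elim: R => [|R IH]; first by rewrite /= big_ord0.
rewrite [sym _]/= map_cons map_cons /= IH big_ord_recr /=.
lia.
Qed.

Lemma hockey R k : (\sum_(j < R) 'C(R - j.+1, k) = 'C(R, k.+1))%N.
Proof.
elim: R => [|R IH]; first by rewrite big_ord0 bin0n.
rewrite big_ord_recl /= subn1 /=.
rewrite (eq_bigr (fun j : 'I_R => 'C(R - j.+1, k))); first by rewrite IH binS addnC.
by move=> j _; rewrite /bump /= add1n subSS.
Qed.

Lemma cp_size k R : (2 ^ k * 'C(R, k) <= size (cp k R))%N.
Proof.
elim: k R => [|k IH] R; first by rewrite bin0.
rewrite /= size_allpairs_dep.
rewrite (sumn_sym (fun j => size (cp k (R - j)))) subn0.
rewrite -hockey big_distrr /= expnS.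
apply: leq_trans (leq_addl _ _).
rewrite big_distrr /=.
by apply: leq_sum => j _; rewrite -mulnA leq_mul2l /= IH.
Qed.

Lemma cp_mem k R x : x \in cp k R ->
  size x = k /\ (\sum_(i < k) absz (nth 0%R x i) <= R)%N.
Proof.
elim: k R x => [|k IH] R x /=; first by rewrite inE => /eqP->; rewrite big_ord0.
move=> /allpairsPdep [a [y [ha hy ->]]].
have [sy hs] := IH _ _ hy.
split; first by rewrite /= sy.
rewrite big_ord_recl /=.
have := @sym_abs R a ha.
rewrite (eq_bigr (fun i : 'I_k => absz (nth 0%R y i))) //.
move: hs; move: (\sum_(i < k) _) (absz a) => s t; lia.
Qed.

Lemma cp_uniq k R : uniq (cp k R).
Proof.
elim: k R => [|k IH] R //=.
apply: allpairs_uniq_dep; first exact: sym_uniq.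
  by move=> a _; apply: IH.
move=> [a x] [b y] _ _ /= [e1 e2].
by subst.
Qed.

Fixpoint box (k N : nat) : seq (seq int) :=
  if k is k'.+1 then [seq a :: x | a <- [seq i%:Z | i <- iota 0 N], x <- box k' N]
  else [:: [::]].

Lemma box_size k N : size (box k N) = (N ^ k)%N.
Proof. by elim: k => [|k IH] //=; rewrite size_allpairs size_map size_iota IH expnS. Qed.

Lemma box_mem k N x : size x = k ->
  (forall i, (i < k)%N -> (0 <= nth 0%R x i < N%:Z)%R) -> x \in box k N.
Proof.
elim: k x => [|k IH] [|a x] //= [sx] h.
apply/allpairsPdep; exists a, x; split => //.
  have /andP[h1 h2] := h 0%N isT.
  clear h; case: a h1 h2 => [j|j] // _ h2.
  by apply/mapP; exists j => //; rewrite mem_iota /= add0n.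
apply: IH => // i hi; exact: (h i.+1).
Qed.

Lemma pigeon (S D : seq (seq int)) (N m : nat) (g : seq int -> seq int -> seq int) :
  uniq S -> uniq D ->
  (forall q u, q \in S -> u \in D -> g q u \in box m N) ->
  (forall q u u', q \in S -> u \in D -> u' \in D -> g q u = g q u' -> u = u') ->
  N ^ m < size S * size D ->
  exists q q' u u', [/\ q \in S, q' \in S, u \in D & u' \in D] /\ q != q' /\ g q u = g q' u'.
Proof.
move=> uS uD hbox hinj hsz.
apply: NNPP => hno.
pose P := [seq (q, u) | q <- S, u <- D].
have uP : uniq P.
  by apply: allpairs_uniq => // [[a b] [c d]] _ _ /= [-> ->].
have injP : {in P &, injective (fun p => g p.1 p.2)}.
  move=> [q u] [q' u'] /allpairsP [[a b] [ha hb [-> ->]]] /allpairsP [[c d] [hc hd [-> ->]]] /= he.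
  case: (eqVneq a c) => [ec|nac].
    by subst c; move: he => /= he; rewrite (hinj a b d ha hb hd he).
  by exfalso; apply: hno; exists a, c, b, d.
have := uniq_leq_size (s1 := [seq g p.1 p.2 | p <- P]) (s2 := box m N).
rewrite (map_inj_in_uniq injP) uP box_size size_map size_allpairs.
move=> /(_ isT) h.
have: size S * size D <= N ^ m.
  apply: h => z /mapP [[a b] /allpairsP [[c d] [hc hd [-> ->]]] ->] /=.
  exact: hbox.
by rewrite leqNgt hsz.
Qed.

Arguments cp_mem {k R x}.
Local Open Scope ring_scope.
Arguments cp_mem {k R x}.

Lemma agm (F : realFieldType) k (E : 'I_k -> F) : (forall i, 0 <= E i) -> \prod_(i<k) E i <= ((\sum_(i<k) E i) / k%:R)^+k.
Proof.
move=> h; have [+ _] := leif_AGM (A := predT) (E := E) (fun i _ => h i).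
by rewrite cardT size_enum_ord.
Qed.

Lemma nth_le_sum k (x : seq int) r i : (\sum_(j<k) absz (nth 0%R x j) <= r)%N -> (i < k)%N -> (absz (nth 0%R x i) <= r)%N.
Proof. by move=> h hi; apply: leq_trans h; rewrite (bigD1 (Ordinal hi)) //= leq_addr. Qed.

Lemma sum_abs_R (R : realType) k (x : seq int) :
  \sum_(i < k) `|(nth 0 x i)%:~R : R| = ((\sum_(i < k) absz (nth 0%R x i))%N)%:R.
Proof. by rewrite natr_sum; apply: eq_bigr => i _; rewrite natr_absz intr_norm. Qed.

Definition fr {R : realType} (x : R) : R := x - (Num.floor x)%:~R.

Lemma fr_ge0 (R : realType) (x : R) : 0 <= fr x.
Proof. by rewrite /fr subr_ge0 floor_le. Qed.
Lemma fr_lt1 (R : realType) (x : R) : fr x < 1.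
Proof. by rewrite /fr ltrBlDr addrC -[1]/(1%:~R) -intrD floorD1_gt. Qed.

Arguments pigeon {S D N m g}.
Arguments pigeon {S D N m g}.

Lemma core (R : realType) (m n : nat) (Y : 'M[R]_(m, n)) (Rq r M : nat) :
  (0 < m)%N -> (0 < n)%N -> (0 < M)%N ->
  ((M + 2 * r) ^ m < (2 ^ n * 'C(Rq, n)) * (2 ^ m * 'C(r, m)))%N ->
  exists (p : 'I_m -> int) (q : 'I_n -> int), (exists j, q j != 0) /\
    (\prod_(i < m) `|@row_form R m n Y q p i|) * (m%:R * M%:R) ^+ m < ((2 * r + m)%N%:R) ^+ m /\
    @Pi_plus R n q * n%:R ^+ n <= ((n + 2 * Rq)%N%:R) ^+ n.
Proof.
move=> m0 n0 M0 hsz.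
pose yq (i : 'I_m) (q : seq int) : R := \sum_(j < n) Y i j * (nth 0 q j)%:~R.
pose F (i : 'I_m) q : int := Num.floor (M%:R * fr (yq i q)).
pose g q u := [seq F i q + nth 0 u i + r%:Z | i <- enum 'I_m].
have Fb i q : (0 <= F i q < M%:Z)%R.
  rewrite floor_ge0 floor_lt_int mulr_ge0 ?ler0n ?fr_ge0 //=.
  rewrite -[X in (_ < X)%R]mulr1 ltr_pM2l ?fr_lt1 // ltr0n //.
have ub u i : u \in cp m r -> (- r%:Z <= nth 0 u i <= r%:Z)%R.
  move=> /cp_mem [su hs].
  case: (ltnP i m) => hi; last by rewrite nth_default ?su //; lia.
  have := @nth_le_sum m u r i hs hi; lia.
have gnth q u k (hk : (k < m)%N) : nth 0%R (g q u) k = (F (Ordinal hk) q + nth 0%R u k + r%:Z)%R.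
  rewrite (nth_map (Ordinal hk)) ?size_enum_ord //.
  by have -> : nth (Ordinal hk) (enum 'I_m) k = Ordinal hk := nth_ord_enum _ (Ordinal hk).
have := @pigeon (cp n Rq) (cp m r) (M + 2 * r) m g (cp_uniq _ _) (cp_uniq _ _).
case.
- move=> q u hq hu; apply: box_mem; first by rewrite size_map size_enum_ord.
  move=> k hk; rewrite gnth.
  have := Fb (Ordinal hk) q; have := ub u k hu; lia.
- move=> q u u' hq hu hu' e.
  have [su _] := cp_mem hu; have [su' _] := cp_mem hu'.
  apply: (@eq_from_nth _ 0%R); first by rewrite su su'.
  move=> k; rewrite su => hk.
  have := congr1 (fun s => nth 0%R s k) e; rewrite /= !(gnth _ _ _ hk).
  by move/addIr/addrI.
- apply: (leq_trans hsz); apply: leq_mul; exact: cp_size.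
move=> q [q' [u [u' [[hq hq' hu hu'] [neq e]]]]].
have [sq sumq] := cp_mem hq; have [sq' sumq'] := cp_mem hq'.
have [su sumu] := cp_mem hu; have [su' sumu'] := cp_mem hu'.
have hcol (i : 'I_m) : (F i q - F i q' = nth 0 u' i - nth 0 u i)%R.
  have := congr1 (fun s => nth 0%R s i) e; rewrite /= !(gnth _ _ _ (ltn_ord i)).
  rewrite (_ : Ordinal (ltn_ord i) = i); last by apply: val_inj.
  move=> /addIr h; rewrite -[F i q](addrK (nth 0%R u i)) h; ring.
pose qv (j : 'I_n) : int := (nth 0 q j - nth 0 q' j)%R.
pose pv (i : 'I_m) : int := (Num.floor (yq i q) - Num.floor (yq i q'))%R.
exists pv, qv; split; [|split].
- apply: NNPP => hnz; move/negP: neq; apply; apply/eqP.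
  apply: (@eq_from_nth _ 0%R); first by rewrite sq sq'.
  move=> k; rewrite sq => hk; apply/eqP; rewrite -subr_eq0; apply/negPn/negP => hne.
  by apply: hnz; exists (Ordinal hk).
- have hL i : row_form Y qv pv i = fr (yq i q) - fr (yq i q').
    rewrite /row_form /fr /pv /qv intrB.
    rewrite (eq_bigr (fun j : 'I_n => Y i j * (nth 0%R q j)%:~R - Y i j * (nth 0%R q' j)%:~R)); last first.
      by move=> j _; rewrite intrB mulrBr.
    rewrite sumrB /yq; ring.
  have hb i : M%:R * `|row_form Y qv pv i| < `|((nth 0 u' i - nth 0 u i)%R)%:~R : R| + 1.
    rewrite hL intrB -[M%:R]ger0_norm ?ler0n // -normrM ltr_norml mulrBr.
    have fa := floor_le (M%:R * fr (yq i q)).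
    have fa' := floorD1_gt (M%:R * fr (yq i q)).
    have fb := floor_le (M%:R * fr (yq i q')).
    have fb' := floorD1_gt (M%:R * fr (yq i q')).
    rewrite intrD mulr1z in fa'. rewrite intrD mulr1z in fb'.
    have hc := congr1 (fun z : int => z%:~R : R) (hcol i).
    rewrite /= !intrB in hc.
    have h1 := ler_norm ((nth 0%R u' i)%:~R - (nth 0%R u i)%:~R : R).
    have h2 := ler_norm (- ((nth 0%R u' i)%:~R - (nth 0%R u i)%:~R : R)); rewrite normrN in h2.
    rewrite /F in hc.
    apply/andP; split; lra.
  set L := fun i => `|row_form Y qv pv i|.
  have hs : (\sum_(i < m) L i) * M%:R < (2 * r + m)%N%:R.
    rewrite mulr_suml.
    apply: (lt_le_trans (y := \sum_(i < m) (`|((nth 0 u' i - nth 0 u i)%R)%:~R : R| + 1))).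
      apply: ltr_sum; first by apply/hasP; exists (Ordinal m0); rewrite ?mem_index_enum.
      by move=> i _; rewrite mulrC; apply: hb.
    rewrite big_split /= sumr_const card_ord natrD natrM lerD2r.
    apply: (le_trans (y := \sum_(i < m) (`|(nth 0 u' i)%:~R : R| + `|(nth 0 u i)%:~R : R|))).
      by apply: ler_sum => i _; rewrite intrB ler_normB.
    rewrite big_split /= !sum_abs_R -natrD -natrM ler_nat; lia.
  apply: (le_lt_trans (y := ((\sum_(i < m) L i) / m%:R) ^+ m * (m%:R * M%:R) ^+ m)).
    apply: ler_wpM2r; first by rewrite exprn_ge0 // mulr_ge0.
    by apply: agm => i; rewrite /L normr_ge0.
  rewrite -exprMn (_ : (\sum_(i < m) L i) / m%:R * (m%:R * M%:R) = (\sum_(i < m) L i) * M%:R); last first.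
    by field; rewrite pnatr_eq0 -lt0n.
  rewrite ltrXn2r // ?lt0n_neq0 //.
  by rewrite mulr_ge0 // sumr_ge0 // => i _; rewrite /L normr_ge0.
- rewrite /Pi_plus.
  apply: (le_trans (y := \prod_(j < n) (1 + `|(qv j)%:~R : R|) * n%:R ^+ n)).
    apply: ler_wpM2r; first by rewrite exprn_ge0.
    apply: ler_prod => j _; apply/andP; split; first by rewrite le_max ler01.
    by rewrite ge_max intr_norm lerDl normr_ge0 lerDr ler01.

  apply: (le_trans (y := ((\sum_(j < n) (1 + `|(qv j)%:~R : R|)) / n%:R) ^+ n * n%:R ^+ n)).
    apply: ler_wpM2r; first by rewrite exprn_ge0.
    by apply: agm => j; rewrite addr_ge0 ?ler01 ?normr_ge0.
  rewrite -exprMn divfK ?pnatr_eq0 -?lt0n //.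
  apply: lerXn2r; rewrite ?nnegrE ?ler0n //.
    by rewrite sumr_ge0 // => j _; rewrite addr_ge0 ?ler01 ?normr_ge0.
  rewrite big_split /= sumr_const card_ord natrD lerD2l.
  apply: (le_trans (y := \sum_(j < n) (`|(nth 0 q j)%:~R : R| + `|(nth 0 q' j)%:~R : R|))).
    by apply: ler_sum => j _; rewrite /qv intrB ler_normB.
  rewrite big_split /= !sum_abs_R -natrD ler_nat; lia.
Qed.

Lemma bern0 (F : realFieldType) (t : F) k : 0 <= t -> t <= 1 -> (1 + t) ^+ k <= 1 + ((2 ^ k)%N%:R - 1) * t.
Proof.
move=> t0 t1; elim: k => [|k IH]; first by rewrite expr0 expn0 subrr mul0r addr0.
rewrite exprS expnS natrM.
have h2 : 1 <= (2 ^ k)%N%:R :> F by rewrite ler1n expn_gt0.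
apply: (le_trans (y := (1 + t) * (1 + ((2 ^ k)%N%:R - 1) * t))).
  by rewrite ler_pM2l // (lt_le_trans ltr01) // lerDl.
set a := (2 ^ k)%N%:R in IH h2 *.
have : t * t <= t by rewrite -[X in _ <= X]mulr1 ler_wpM2l.
nra.
Qed.

Lemma bern (F : realFieldType) (t : F) k : 0 <= t -> t <= 1 -> (1 + t) ^+ k <= 1 + (2 ^ k)%N%:R * t.
Proof.
move=> t0 t1; apply: (le_trans (@bern0 F t k t0 t1)); rewrite lerD2l ler_wpM2r //; lra.
Qed.

Lemma ffact_low R n : ((R + 1 - n) ^ n <= 'C(R, n) * n`!)%N.
Proof.
rewrite bin_ffact.
elim: n R => [|n IH] R; first by rewrite expn0 ffactn0.
rewrite ffactnS expnS.
case: R => [|R]; first by rewrite ffact0n.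
have := IH R; rewrite /= => h.
have e : (R.+1 + 1 - n.+1 = R + 1 - n)%N by lia.
rewrite e; apply: leq_mul => //; lia.
Qed.

Lemma exists_step (P : nat -> Prop) : P 0%N -> ~ (forall k, P k) -> exists k, P k /\ ~ P k.+1.
Proof.
move=> P0 hn; apply: NNPP => hno; apply: hn; elim=> // k IH.
by apply: NNPP => hk; apply: hno; exists k.
Qed.

Lemma pow_bound (F : realFieldType) (x a k : nat) (eta : F) :
  (0 < x)%N -> 0 < eta -> eta <= 1 -> (2 ^ k * a)%N%:R <= eta * x%:R ->
  ((x + a)%N%:R) ^+ k <= (x%:R) ^+ k * (1 + eta).
Proof.
move=> x0 e0 e1 h.
have xr : 0 < x%:R :> F by rewrite ltr0n.
pose t : F := a%:R / x%:R.
have ht : (x + a)%N%:R = x%:R * (1 + t) by rewrite /t natrD mulrDr mulr1 mulrC divfK // gt_eqF.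
have t0 : 0 <= t by rewrite /t divr_ge0 ?ler0n.
have h2 : (2 ^ k)%N%:R * t <= eta.
  by rewrite /t mulrA ler_pdivrMr // -natrM.
have h1 : 1 <= (2 ^ k)%N%:R :> F by rewrite ler1n expn_gt0.
have t1 : t <= 1.
  apply: (le_trans (y := (2 ^ k)%N%:R * t)); first by rewrite ler_peMl.
  exact: le_trans h2 e1.
rewrite ht exprMn ler_wpM2l ?exprn_ge0 ?ler0n //.
apply: (le_trans (@bern F t k t0 t1)); by rewrite lerD2l.
Qed.

Lemma chain (F : realFieldType) (T c K eta Nn Mm nf mf XR Xr al be W P MM A Bm : F) :
  0 < Nn -> 0 < Mm -> 0 < nf -> 0 < mf -> 0 <= XR -> 0 <= Xr -> 0 <= al -> 0 <= be ->
  0 <= MM -> 0 <= eta -> 0 <= P -> 0 <= Bm -> 0 <= A ->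
  K = mf * nf / (Mm * Nn) ->
  T * Nn <= A -> A <= XR * (1 + eta) -> Bm <= Xr * (1 + eta) ->
  XR <= al * nf -> Xr <= be * mf -> al * be <= W -> W <= P * MM -> P <= 1 + eta ->
  K * (1 + eta) ^+ 3 <= c ->
  T * Bm <= c * (Mm * MM).
Proof.
move=> Nn0 Mm0 nf0 mf0 XR0 Xr0 al0 be0 MM0 eta0 P0 Bm0 A0 hK h1 h2 h3 h4 h5 h6 h7 h8 h9.
set e := 1 + eta in h2 h3 h8 h9 *.
have e0 : 0 <= e by rewrite /e addr_ge0 ?ler01.
rewrite -(ler_pM2r Nn0).
have s1 : T * Bm * Nn <= A * Bm by rewrite mulrAC ler_wpM2r.
have s2 : A * Bm <= (XR * e) * (Xr * e) by apply: ler_pM.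
have s3 : (XR * e) * (Xr * e) <= (al * nf) * (be * mf) * e ^+ 2.
  rewrite expr2 mulrACA; apply: ler_wpM2r; first by rewrite mulr_ge0.
  by apply: ler_pM.
have s4 : (al * nf) * (be * mf) * e ^+ 2 <= W * (nf * mf) * e ^+ 2.
  rewrite (mulrACA al nf be mf); apply: ler_wpM2r; first by rewrite exprn_ge0.
  by apply: ler_wpM2r => //; rewrite mulr_ge0 ?ltW.
have s5 : W * (nf * mf) * e ^+ 2 <= MM * (nf * mf) * e ^+ 3.
  have t2 : W <= e * MM by apply: (le_trans h7); apply: ler_wpM2r.
  apply: (le_trans (y := (e * MM) * (nf * mf) * e ^+ 2)); last by rewrite le_eqVlt; apply/orP; left; apply/eqP; ring.
  apply: ler_wpM2r; first by rewrite exprn_ge0.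
  by apply: ler_wpM2r => //; rewrite mulr_ge0 ?ltW.
have s6 : MM * (nf * mf) * e ^+ 3 = K * e ^+ 3 * (Mm * MM * Nn).
  by rewrite hK; field; rewrite ?gt_eqF.
have s7 : K * e ^+ 3 * (Mm * MM * Nn) <= c * (Mm * MM * Nn).
  by rewrite ler_wpM2r // !mulr_ge0 // ltW.
rewrite (_ : c * (Mm * MM) * Nn = c * (Mm * MM * Nn)); last by rewrite !mulrA.
by apply: (le_trans s1); apply: (le_trans s2); apply: (le_trans s3);
   apply: (le_trans s4); apply: (le_trans s5); rewrite s6.
Qed.
Lemma ar1 m b : (2 * (m + b) + m <= 2 * b + 2 + 3 * m)%N. Proof. lia. Qed.
Lemma ar2 n Rq : (n <= Rq)%N -> (n + 2 * Rq.+1 = 2 * (Rq - n) + 2 + 3 * n)%N. Proof. lia. Qed.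
Lemma ar3 n Rq bZ : (n + bZ <= Rq)%N -> (bZ < 2 * (Rq - n) + 2)%N. Proof. lia. Qed.
Lemma ar4 n Rq : (n <= Rq)%N -> (2 * (Rq - n) + 2 = 2 * (Rq + 1 - n))%N. Proof. lia. Qed.
Lemma ar5 n a b : (a <= b)%N -> (n + 2 * a <= n + 2 * b)%N. Proof. lia. Qed.
Lemma ar6 x y z : ((x + y.+1) + z = (x + y) + 1 + z)%N. Proof. lia. Qed.

Local Close Scope int_scope.
Local Open Scope nat_scope.
Local Open Scope ring_scope.


Lemma ar8 m b : (2 * b + 2 = 2 * ((m + b) + 1 - m))%N. Proof. by rewrite -addnA addKn mulnDr. Qed.
Lemma ar9 n bZ Rq : (n + bZ <= Rq)%N -> (n <= Rq)%N. Proof. by apply: leq_trans; rewrite leq_addr. Qed.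
Lemma ar7 b : (b < 2 * b + 2)%N. Proof. by rewrite addn2 ltnS mul2n -addnn leqW // leq_addr. Qed.

Theorem mainTheorem3 (R : realType) (m n : nat) (hm : (1 <= m)%N) (hn : (1 <= n)%N)
  (c : R) :
  ((m`! * n`!)%:R / ((m ^ m)%:R * (n ^ n)%:R) < c) ->
  forall Y : 'M[R]_(m, n), @D_times R m n (fun x : R => c * @psi1 R x) Y.
Proof.
move=> hc Y.
set K := (m`! * n`!)%:R / ((m ^ m)%:R * (n ^ n)%:R) in hc.
have mf0 : 0 < m`!%:R :> R by rewrite ltr0n fact_gt0.
have nf0 : 0 < n`!%:R :> R by rewrite ltr0n fact_gt0.
have Mm0 : 0 < m%:R ^+ m :> R by rewrite exprn_gt0 // ltr0n.
have Nn0 : 0 < n%:R ^+ n :> R by rewrite exprn_gt0 // ltr0n.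
have hK : K = m`!%:R * n`!%:R / (m%:R ^+ m * n%:R ^+ n) by rewrite /K natrM !natrX.
have K0 : 0 < K by rewrite hK divr_gt0 // mulr_gt0.
pose eta := Num.min 1 ((c - K) / (8 * K)).
have eta0 : 0 < eta.
  by rewrite lt_min ltr01 /= divr_gt0 ?subr_gt0 // mulr_gt0.
have eta1 : eta <= 1 by rewrite ge_min lexx.
have eta2 : eta <= (c - K) / (8 * K) by rewrite ge_min lexx orbT.
have etaK : K * (1 + eta) ^+ 3 <= c.
  have h8 : 8 * K * eta <= c - K.
    by rewrite mulrC -ler_pdivlMr // mulr_gt0.
  have e2 : eta * eta <= eta by rewrite -[X in _ <= X]mulr1 ler_wpM2l // ltW.
  have e3 : eta * eta * eta <= eta.
    nra.
  have : K * (1 + eta) ^+ 3 = K + K * (3 * eta + 3 * (eta * eta) + eta * eta * eta) by ring.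
  move=> ->; nra.
pose rho := eta / (2 ^ m)%N%:R.
have p2m : 1 <= (2 ^ m)%N%:R :> R by rewrite ler1n expn_gt0.
have p2m0 : 0 < (2 ^ m)%N%:R :> R by rewrite ltr0n expn_gt0.
have rho0 : 0 < rho by rewrite divr_gt0.
have rhoP : (1 + rho) ^+ m <= 1 + eta.
  have r1 : rho <= 1.
    by rewrite /rho ler_pdivrMr // mul1r (le_trans eta1).
  apply: le_trans (@bern R rho m (ltW rho0) r1) _.
  by rewrite lerD2l /rho mulrC divfK ?gt_eqF.
have [b hb] : exists b : nat, (2 ^ m * (3 * m))%N%:R / eta < b%:R.
  by exists (Num.bound ((2 ^ m * (3 * m))%N%:R / eta)); apply: archi_boundP; rewrite divr_ge0 ?ler0n ?ltW.
pose r := (m + b)%N.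
pose xr := (2 * b + 2)%N.
have hBr : ((2 * r + m)%N%:R) ^+ m <= (xr%:R) ^+ m * (1 + eta) :> R.
  apply: (le_trans (y := ((xr + 3 * m)%N%:R) ^+ m)).
    by apply: lerXn2r; rewrite ?nnegrE ?ler0n // ler_nat /xr /r ar1.
  apply: pow_bound => //; first by rewrite /xr addn2.
  move: hb; rewrite ltr_pdivrMr // => h; rewrite mulrC; apply: ltW; apply: (lt_le_trans h).
  by rewrite ler_wpM2r ?ltW // ltr_nat /xr ar7.
have [M1 hM1] : exists M1 : nat, (2 * r + 1)%N%:R < rho * M1%:R.
  exists (Num.bound ((2 * r + 1)%N%:R / rho)).
  have := @archi_boundP R ((2 * r + 1)%N%:R / rho).
  by rewrite divr_ge0 ?ler0n ?ltW // => /(_ isT); rewrite ltr_pdivrMr // mulrC.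
have M10 : (0 < M1)%N.
  rewrite lt0n; apply/eqP => h; move: hM1; rewrite h mulr0 ltNge ler0n.
  by [].
pose Z := (2 ^ n * (3 * n))%N%:R / eta + (n`! * (M1 + 2 * r) ^ m)%N%:R.
have [bZ hbZ] : exists bZ : nat, Z < bZ%:R.
  exists (Num.bound Z); apply: archi_boundP.
  by rewrite addr_ge0 ?divr_ge0 ?ler0n ?ltW.
pose R0 := (n + bZ)%N.
pose g := fun k : nat => ((n + 2 * k)%N%:R / n%:R : R) ^+ n.
have n0 : 0 < n%:R :> R by rewrite ltr0n.
have g0 a : 0 < g a.
  by rewrite /g exprn_gt0 // divr_gt0 // ltr0n addn_gt0 hn.
have g_mono a b' : (a <= b')%N -> g a <= g b'.
  move=> hab; apply: lerXn2r; rewrite ?nnegrE ?divr_ge0 ?ler0n //.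
  by rewrite ler_pM2r ?invr_gt0 // ler_nat ar5.
exists (g R0 + 1); split; first by rewrite ltrDr g0.
move=> T hT.
have T1 : 1 < T by apply: lt_le_trans hT; rewrite ltrDr g0.
have [Rq [hR1 hR2]] : exists k, g k < T /\ ~ g k.+1 < T.
  apply: exists_step; first by rewrite /g muln0 addn0 divff ?gt_eqF // expr1n.
  move=> hall; have := hall (n * Num.bound T)%N.
  have := @archi_boundP R T; rewrite (le_trans ler01 (ltW T1)) => /(_ isT) hb2.
  apply/negP; rewrite -leNgt.
  apply: (le_trans (ltW hb2)).
  have e1 : (n + 2 * (n * Num.bound T))%N%:R / n%:R = 1 + 2 * (Num.bound T)%:R :> R.
    by rewrite natrD !natrM; field; rewrite gt_eqF.
  rewrite /g e1; apply: (le_trans _ (ler_eXnr _ _)) => //.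
    by rewrite -[X in X <= _]add0r lerD ?ler01 // ler_peMl ?ler0n // ler1n.
  by rewrite lerDl mulr_ge0 ?ler0n.
have RqR0 : (R0 <= Rq)%N.
  rewrite leqNgt; apply/negP => h; apply: hR2.
  by apply: le_lt_trans (g_mono _ _ h) _; apply: lt_le_trans hT; rewrite ltrDl ltr01.
have nRq : (n <= Rq)%N by apply: ar9 RqR0.
pose xR := (2 * (Rq - n) + 2)%N.
have xRb : (bZ < xR)%N by apply: ar3.
have xRb' : bZ%:R < xR%:R :> R by rewrite ltr_nat.
have hZ1 : (2 ^ n * (3 * n))%N%:R <= eta * xR%:R.
  have : (2 ^ n * (3 * n))%N%:R / eta < xR%:R.
    apply: le_lt_trans (lt_trans hbZ xRb'); rewrite /Z lerDl ler0n //.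
  by rewrite ltr_pdivrMr // mulrC => /ltW.
have hZ2 : (n`! * (M1 + 2 * r) ^ m < xR)%N.
  rewrite -(ltr_nat R); apply: le_lt_trans (lt_trans hbZ xRb').
  by rewrite /Z lerDr divr_ge0 ?ler0n ?ltW.
pose al := (2 ^ n * 'C(Rq, n))%N.
pose be := (2 ^ m * 'C(r, m))%N.
have hal : (xR ^ n <= al * n`!)%N.
  by rewrite /xR ar4 // expnMn /al -mulnA leq_mul2l ffact_low orbT.
have hbe : (xr ^ m <= be * m`!)%N.
  by rewrite /xr (ar8 m b) expnMn /be -mulnA leq_mul2l ffact_low orbT.
have be1 : (0 < be)%N.
  by rewrite /be muln_gt0 expn_gt0 /= bin_gt0 /r leq_addr.
have xR0 : (0 < xR)%N by rewrite /xR addn2.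
have P0 : ((M1 + 0 + 2 * r) ^ m < al * be)%N.
  rewrite addn0; apply: leq_trans (leq_pmulr _ be1).
  rewrite -(ltn_pmul2r (fact_gt0 n)) mulnC.
  apply: leq_trans hZ2 _; apply: leq_trans hal.
  by rewrite -{1}(expn1 xR) leq_pexp2l.
have [k [hk1 hk2]] : exists k, ((M1 + k + 2 * r) ^ m < al * be)%N /\ ~ ((M1 + k.+1 + 2 * r) ^ m < al * be)%N.
  apply: (exists_step (fun k => ((M1 + k + 2 * r) ^ m < al * be)%N) P0) => hall; have := hall (al * be)%N; apply/negP; rewrite -leqNgt.
  apply: (@leq_trans (M1 + al * be + 2 * r)%N); first by rewrite -addnA addnCA leq_addr.
  by rewrite -{1}(expn1 (M1 + _ + _)) leq_pexp2l // addn_gt0 addn_gt0 M10.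
pose M := (M1 + k)%N.
have M0 : (0 < M)%N by rewrite /M addn_gt0 M10.
have [p [q [hq0 [hLp hPi]]]] := @core R m n Y Rq r M hm hn M0 hk1.
have T0 : 0 < T by apply: lt_trans T1; exact: ltr01.
exists p, q; split => //; split.
- set Bm := ((2 * r + m)%N%:R : R) ^+ m in hLp *.
  set MM := (M%:R : R) ^+ m.
  have key : T * Bm <= c * (m%:R ^+ m * MM).
    apply: (@chain R T c K eta (n%:R ^+ n) (m%:R ^+ m) (n`!%:R) (m`!%:R) ((xR%:R) ^+ n) ((xr%:R) ^+ m) (al%:R) (be%:R) (((M + 1 + 2 * r)%N%:R) ^+ m) ((1 + rho) ^+ m) MM (((n + 2 * Rq.+1)%N%:R) ^+ n) Bm);
      try by rewrite ?exprn_ge0 ?ler0n ?addr_ge0 ?ler01 ?ltW.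
    all: try by rewrite exprn_ge0 // addr_ge0 ?ler01 // ltW.
    all: try by apply: ltW.
    all: try exact: hBr.
    all: try exact: rhoP.
    all: try exact: etaK.
    + have := hR2; move/negP; rewrite -leNgt /g expr_div_n.
      by rewrite ler_pdivlMr.
    + by rewrite (ar2 n Rq nRq); apply: pow_bound => //; apply: ltW.
    + by rewrite -natrX -natrM ler_nat.
    + by rewrite -natrX -natrM ler_nat.
    + by rewrite -natrM -natrX ler_nat -ar6 leqNgt; apply/negP.
    + rewrite -exprMn; apply: lerXn2r; first by rewrite nnegrE ler0n.
        by rewrite nnegrE mulr_ge0 ?ler0n // addr_ge0 ?ler01 // ltW.
      have h1 : rho * M1%:R <= rho * M%:R by rewrite ler_pM2l // ler_nat /M leq_addr.
      rewrite (_ : (M + 1 + 2 * r)%N%:R = M%:R + (2 * r + 1)%N%:R :> R); last first.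
        by rewrite !natrD; ring.
      rewrite mulrDl mul1r lerD2l; exact: ltW (lt_le_trans hM1 h1).
  have Q0 : 0 < m%:R ^+ m * MM by rewrite mulr_gt0 // exprn_gt0 // ltr0n.
  rewrite exprMn in hLp.
  rewrite /psi1 ltr_pdivlMr // -(ltr_pM2r Q0).
  apply: lt_le_trans key; rewrite mulrAC mulrC ltr_pM2l //.
- have := hR1; rewrite /g expr_div_n => h.
  apply: le_lt_trans h; rewrite ler_pdivlMr //.
Qed.
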